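(* Let $n\ge3$, $\hat r\in\mathbb R^n$, $\delta\ge0$, $p\in[1,\infty]$, and let $q\in[1,\infty]$ be the dual exponent with $1/p+1/q=1$. Then for every $\pi\in\Delta_n$, $$\max_{\|\Delta\|_p\le\delta}\mathrm{Reg}(\pi,\hat r+\Delta)=\max_i\big\{\hat r_i-\langle\pi,\hat r\rangle+\delta\,b_{p,i}(\pi)\big\},\qquad b_{p,i}(\pi):=\|e_i-\pi\|_q.$$ Moreover, the following are equivalent: (a) for every $i$ there is a function $f_i$ with $b_{p,i}(\pi)=f_i(\pi_i)$ for all $\pi\in\Delta_n$; (b) $p\in\{1,\infty\}$. In these endpoint cases, $b_{1,i}(\pi)=1-\pi_i$ and $b_{\infty,i}(\pi)=2(1-\pi_i)$, and consequently $$\max_{\|\Delta\|_\infty\le\delta}\mathrm{Reg}(\pi,\hat r+\Delta)=2\delta+\max_i\{\hat r_i-2\delta\pi_i\}-\langle\pi,\hat r\rangle.$$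
   Context: $\Delta_n:=\{q\in\mathbb R^n_+:\sum_iq_i=1\}$; $e_i$ is the $i$-th standard basis vector. For $\pi\in\Delta_n$ and $s\in\mathbb R^n$, $\mathrm{Reg}(\pi,s):=\max_{\beta\in\Delta_n}\langle\beta-\pi,s\rangle$. *)

(* Defs.v *)
From HB Require Import structures.
From mathcomp Require Import all_boot all_order all_algebra.
From mathcomp Require Import all_classical all_reals.
From mathcomp Require Import ereal exp.
Set Implicit Arguments. Unset Strict Implicit. Unset Printing Implicit Defensive.
Import Order.TTheory GRing.Theory Num.Theory.
Local Open Scope classical_set_scope.
Local Open Scope ring_scope.

Section Defs.
Variable R : realType.
Variable n : nat.
Definition vec := 'I_n -> R.

Definition maxI (F : 'I_n -> R) : R := sup (range F).

Definition dot (x y : vec) : R := \sum_(i < n) x i * y i.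

Definition simplex (q : vec) : Prop := (forall i, 0 <= q i) /\ \sum_(i < n) q i = 1.

Definition basis (i : 'I_n) : vec := fun j => (i == j)%:R.

Definition vadd (x y : vec) : vec := fun j => x j + y j.
Definition vsub (x y : vec) : vec := fun j => x j - y j.

Definition Reg (pi s : vec) : R := sup [set dot (vsub beta pi) s | beta in simplex].

Definition pnorm (p : \bar R) (x : vec) : R :=
  match p with
  | EFin r => (\sum_(i < n) `|x i| `^ r) `^ r^-1
  | +oo%E => maxI (fun i => `|x i|)
  | -oo%E => 0
  end.

Definition dual (p : \bar R) : \bar R :=
  match p with
  | EFin r => if r == 1 then +oo%E else EFin (r / (r - 1))
  | +oo%E => 1%E
  | -oo%E => -oo%E
  end.

Definition bcoef (p : \bar R) (i : 'I_n) (pi : vec) : R := pnorm (dual p) (vsub (basis i) pi).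

Definition IsMaxOver (T : Type) (P : T -> Prop) (g : T -> R) (v : R) : Prop :=
  (exists x, P x /\ g x = v) /\ (forall x, P x -> g x <= v).
End Defs.

(* Main.v *)
Require Import Defs.
From HB Require Import structures.
From mathcomp Require Import all_boot all_order all_algebra.
From mathcomp Require Import all_classical all_reals.
From mathcomp Require Import ereal exp.
From mathcomp Require Import ring lra.
Set Implicit Arguments. Unset Strict Implicit.
Import Order.TTheory GRing.Theory Num.Theory.
Local Open Scope classical_set_scope.
Local Open Scope ring_scope.


Lemma sup_attained (R : realType) (E : set R) x :
  E x -> (forall y, E y -> y <= x) -> sup E = x.
Proof.
move=> Ex ub; apply/le_anti/andP; split.
  by apply: ge_sup; [exists x | move=> y /ub].
by apply: ub_le_sup => //; exists x => y /ub.
Qed.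

Lemma argmax_ex (R : realType) (n : nat) (F : 'I_n -> R) : (0 < n)%N ->
  exists k, forall i, F i <= F k.
Proof.
case: n F => [//|m] F _.
case: (@arg_maxP _ R 'I_m.+1 ord0 xpredT F isT) => k _ H.
by exists k => i; apply: H.
Qed.

Lemma maxI_eq (R : realType) (n : nat) (F : 'I_n -> R) k :
  (forall i, F i <= F k) -> maxI F = F k.
Proof.
move=> H; apply: sup_attained; first by exists k.
by move=> y [i _ <-].
Qed.

Lemma maxI_spec (R : realType) (n : nat) (F : 'I_n -> R) : (0 < n)%N ->
  (exists k, maxI F = F k) /\ (forall i, F i <= maxI F).
Proof.
move=> n0; have [k Hk] := argmax_ex F n0.
by rewrite (maxI_eq Hk); split; [exists k|].
Qed.


Lemma eqkk n (k : 'I_n) : (k == k) = true.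
Proof. by apply/eqP. Qed.

Lemma dot_basis (R : realType) n (k : 'I_n) (s : vec R n) : dot (Defs.basis R k) s = s k.
Proof.
rewrite /dot (bigD1 k) //= /Defs.basis eqkk mul1r big1 ?addr0 // => j /negbTE jk.
by rewrite eq_sym jk mul0r.
Qed.

Lemma simplex_basis (R : realType) n (k : 'I_n) : simplex (Defs.basis R k).
Proof.
split; first by move=> i; rewrite /Defs.basis ler0n.
rewrite (bigD1 k) //= /Defs.basis eqkk big1 ?addr0 // => j /negbTE jk.
by rewrite eq_sym jk.
Qed.

Lemma dot_vsub (R : realType) n (x y s : vec R n) : dot (vsub x y) s = dot x s - dot y s.
Proof. by rewrite /dot -sumrB; apply: eq_bigr => i _; rewrite /vsub mulrBl. Qed.

Lemma dot_le_max (R : realType) n (b s : vec R n) : (0 < n)%N -> simplex b ->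
  dot b s <= maxI s.
Proof.
move=> n0 [b0 b1]; have [_ H] := maxI_spec s n0.
rewrite /dot (le_trans (y := \sum_(i < n) b i * maxI s)).
- by [].
- by apply: ler_sum => i _; rewrite ler_wpM2l.
by rewrite -mulr_suml b1 mul1r.
Qed.

Lemma Reg_eq (R : realType) n (pi s : vec R n) : (0 < n)%N -> simplex pi ->
  Reg pi s = maxI s - dot pi s.
Proof.
move=> n0 spi; apply: sup_attained.
  have [[k ->] _] := maxI_spec s n0.
  by exists (Defs.basis R k); [apply: simplex_basis | rewrite dot_vsub dot_basis].
move=> y [b sb <-]; rewrite dot_vsub lerD2r; exact: dot_le_max.
Qed.


Lemma powRV (R : realType) (w r : R) : 0 <= w -> (w^-1) `^ r = (w `^ r)^-1.
Proof.
by move=> w0; rewrite -powR_inv1 // -powRrM mulN1r powRN.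
Qed.

Lemma powRK (R : realType) (S r : R) : 0 <= S -> r != 0 -> (S `^ r^-1) `^ r = S.
Proof. by move=> S0 r0; rewrite -powRrM mulVf // powRr1. Qed.

Lemma sum_pow_eq0 (R : realType) n (x : vec R n) (r : R) :
  \sum_(i < n) `|x i| `^ r = 0 -> forall i, x i = 0.
Proof.
move=> H i; have := psumr_eq0P (fun i _ => powR_ge0 `|x i| r) H (i := i) isT.
by move/powR_eq0_eq0/normr0_eq0.
Qed.

Lemma holder_gen (R : realType) n (r q : R) (x y : vec R n) :
  0 < r -> 0 < q -> r^-1 + q^-1 = 1 ->
  \sum_(i < n) `|x i| * `|y i| <= pnorm r%:E x * pnorm q%:E y.
Proof.
move=> r0 q0 rq /=.
set Sx := \sum_(i < n) `|x i| `^ r; set Sy := \sum_(i < n) `|y i| `^ q.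
have Sx0 : 0 <= Sx by apply: sumr_ge0 => i _; apply: powR_ge0.
have Sy0 : 0 <= Sy by apply: sumr_ge0 => i _; apply: powR_ge0.
have [SxE|Sxn] := eqVneq Sx 0.
  have x0 := sum_pow_eq0 SxE.
  rewrite big1 ?mulr_ge0 ?powR_ge0 // => i _; by rewrite x0 normr0 mul0r.
have [SyE|Syn] := eqVneq Sy 0.
  have y0 := sum_pow_eq0 SyE.
  rewrite big1 ?mulr_ge0 ?powR_ge0 // => i _; by rewrite y0 normr0 mulr0.
set A := Sx `^ r^-1; set B := Sy `^ q^-1.
have A0 : 0 < A by apply: powR_gt0; rewrite lt_def Sxn.
have B0 : 0 < B by apply: powR_gt0; rewrite lt_def Syn.
have Ar : A `^ r = Sx by apply: powRK; rewrite // gt_eqF.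
have Bq : B `^ q = Sy by apply: powRK; rewrite // gt_eqF.
clearbody A B.
apply: (le_trans (y := \sum_(i < n) A * B *
   ((`|x i| `^ r / Sx) / r + (`|y i| `^ q / Sy) / q))).
  apply: ler_sum => i _.
  have := @conjugate_powR R (`|x i| / A) (`|y i| / B) r q
     (divr_ge0 (normr_ge0 _) (ltW A0)) (divr_ge0 (normr_ge0 _) (ltW B0)) r0 q0 rq.

  have iB0 : 0 <= B^-1 by rewrite invr_ge0 ltW.
  have iA0 : 0 <= A^-1 by rewrite invr_ge0 ltW.
  rewrite (powRM r (normr_ge0 (x i)) iA0) (powRM q (normr_ge0 (y i)) iB0).
  rewrite (powRV r (ltW A0)) (powRV q (ltW B0)) Ar Bq.
  move=> H.
  have nA : A != 0 by rewrite gt_eqF.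
  have nB : B != 0 by rewrite gt_eqF.
  have -> : `|x i| * `|y i| = A * B * (`|x i| / A * (`|y i| / B)).
    by rewrite mulrACA [A * _]mulrC [B * _]mulrC !divfK.
  by rewrite ler_pM2l ?mulr_gt0.
rewrite -mulr_sumr big_split /= -!mulr_suml.
by rewrite divff // divff // !mul1r rq mulr1.
Qed.


Lemma pnorm_ge0 (R : realType) n (p : \bar R) (x : vec R n) : (0 < n)%N ->
  0 <= pnorm p x.
Proof.
move=> n0; case: p => [r| |] /=; [exact: powR_ge0| |by []].
have [_ H] := maxI_spec (fun i => `|x i|) n0.
by apply: le_trans (H (Ordinal n0)).
Qed.

Lemma pnorm1 (R : realType) n (x : vec R n) :
  pnorm 1%E x = \sum_(i < n) `|x i|.
Proof.
rewrite /= invr1 powRr1; last by apply: sumr_ge0 => i _; apply: powR_ge0.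
by apply: eq_bigr => i _; rewrite powRr1.
Qed.

Lemma dot_le_abs (R : realType) n (x y : vec R n) :
  dot x y <= \sum_(i < n) `|y i| * `|x i|.
Proof.
rewrite /dot; apply: ler_sum => i _.
by rewrite mulrC -normrM; apply: ler_norm.
Qed.

Lemma holder_all (R : realType) n (p : \bar R) (y D : vec R n) : (0 < n)%N ->
  (1 <= p)%E -> dot y D <= pnorm p D * pnorm (dual p) y.
Proof.
move=> n0; case: p => [r| |] //= hp.
- move: hp; rewrite lee_fin => r1.
  have [->|rn1] := eqVneq r 1.
    rewrite -[X in X * _]/(pnorm 1%E D) pnorm1.
    apply: (le_trans (dot_le_abs _ _)).
    have [_ H] := maxI_spec (fun i => `|y i|) n0.
    rewrite mulr_suml; apply: ler_sum => i _.
    by rewrite ler_wpM2l //; apply: H.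
  have r1' : 1 < r by rewrite lt_def rn1 r1.
  apply: (le_trans (dot_le_abs _ _)).
  rewrite (eq_bigr (fun i => `|D i| * `|y i|)); last by move=> i _; rewrite mulrC.
  apply: holder_gen.
  + by lra.
  + by rewrite divr_gt0 // ?subr_gt0 //; lra.
  + have r0 : r != 0 by rewrite gt_eqF //; lra.
    have r10 : r - 1 != 0 by rewrite subr_eq0 rn1.
    rewrite invf_div; field.
    by [].
- rewrite -[X in _ * X]/(pnorm 1%E y) pnorm1.
  apply: (le_trans (dot_le_abs _ _)).
  have [_ H] := maxI_spec (fun i => `|D i|) n0.
  rewrite mulr_sumr; apply: ler_sum => i _.
  by rewrite ler_wpM2r //; apply: H.
Qed.


Lemma attain_r (R : realType) n (r : R) (y : vec R n) (delta : R) :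
  1 < r -> 0 <= delta ->
  exists D : vec R n, pnorm r%:E D <= delta /\
     dot y D = delta * pnorm (r / (r - 1))%:E y.
Proof.
move=> r1 d0; set q := r / (r - 1).
have r0 : r != 0 by rewrite gt_eqF //; lra.
have r10 : r - 1 != 0 by rewrite subr_eq0 gt_eqF.
have q1 : 1 < q by rewrite /q ltr_pdivlMr ?subr_gt0 //; lra.
have q0 : 0 < q by lra.
have qr : (q - 1) * r = q by rewrite /q; field.
rewrite /=.
set Sy := \sum_(i < n) `|y i| `^ q.
have Sy0 : 0 <= Sy by apply: sumr_ge0 => i _; apply: powR_ge0.
have [SyE|Syn] := eqVneq Sy 0.
  exists (fun _ => 0); split.
    rewrite big1; first by rewrite powR0 ?invr_eq0 //.
    by move=> i _; rewrite normr0 powR0.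
  rewrite SyE powR0 ?invr_eq0 ?gt_eqF // mulr0 /dot big1 // => i _.
  by rewrite mulr0.
set B := Sy `^ q^-1.
have B0 : 0 < B by apply: powR_gt0; rewrite lt_def Syn.
have Bq : B `^ q = Sy by rewrite /B -powRrM mulVf ?gt_eqF // powRr1.
clearbody B.
set c := delta / B `^ (q - 1).
have Bq1 : 0 < B `^ (q - 1) by apply: powR_gt0.
have c0 : 0 <= c by rewrite divr_ge0 // ltW.
exists (fun j => c * (y j * (`|y j|) `^ (q - 1 - 1))).
have nD : forall j, `|c * (y j * (`|y j|) `^ (q - 1 - 1))| = c * (`|y j|) `^ (q - 1).
  move=> j; rewrite normrM (ger0_norm c0) normrM (ger0_norm (powR_ge0 _ _)).
  by rewrite mulr_powRB1 // subr_gt0.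
split.
  rewrite (eq_bigr (fun j => c `^ r * (`|y j|) `^ q)); last first.
    by move=> j _; rewrite nD powRM ?powR_ge0 // -powRrM qr.
  have iB : 0 <= (B `^ (q - 1))^-1 by rewrite invr_ge0 ltW.
  rewrite -mulr_sumr -/Sy /c (powRM r d0 iB) (powRV r (ltW Bq1)).
  rewrite -powRrM qr Bq mulrAC.
  rewrite mulfK //.
  by rewrite -powRrM mulfV // powRr1.
rewrite /dot (eq_bigr (fun j => c * (`|y j|) `^ q)); last first.
  move=> j _; rewrite mulrCA [y j * (y j * _)]mulrA.
  have -> : y j * y j = `|y j| * `|y j|.
    by rewrite -normrM ger0_norm // -expr2 sqr_ge0.
  rewrite -[_ * _ * (`|y j|) `^ _]mulrA (mulr_powRB1 (normr_ge0 _)) ?subr_gt0 //.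
  by rewrite mulr_powRB1.
rewrite -mulr_sumr -/Sy /c -Bq -(mulr_powRB1 (ltW B0) q0).
by rewrite [B * _]mulrC mulrA divfK ?gt_eqF.
Qed.


Lemma sum_single (R : realType) n (F : 'I_n -> R) k :
  (forall j, j != k -> F j = 0) -> \sum_(j < n) F j = F k.
Proof. by move=> H; rewrite (bigD1 k) //= big1 ?addr0. Qed.

Lemma sg_le1 (R : realType) (x : R) : `|Num.sg x| <= 1.
Proof. by rewrite normr_sg; case: (x != 0). Qed.

Lemma attain (R : realType) n (p : \bar R) (y : vec R n) (delta : R) : (0 < n)%N ->
  (1 <= p)%E -> 0 <= delta ->
  exists D : vec R n, pnorm p D <= delta /\ dot y D = delta * pnorm (dual p) y.
Proof.
move=> n0 hp d0; case: p hp => [r| |] //= hp.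
- move: hp; rewrite lee_fin => r1.
  have [->|rn1] := eqVneq r 1.
    have [k Hk] := argmax_ex (fun i => `|y i|) n0.
    exists (fun j => delta * Num.sg (y k) * Defs.basis R k j); split.
      rewrite -[X in X <= _]/(pnorm 1%E _) pnorm1 (sum_single (k := k)).
        rewrite /Defs.basis eqkk mulr1 normrM ger0_norm //.
        by rewrite -[X in _ <= X]mulr1 ler_wpM2l // sg_le1.
      by move=> j jk; rewrite /Defs.basis eq_sym (negbTE jk) mulr0 normr0.
    rewrite /= (maxI_eq Hk) /dot (sum_single (k := k)).
      by rewrite /Defs.basis eqkk mulr1 mulrCA normrEsg [Num.sg _ * _]mulrC.
    by move=> j jk; rewrite /Defs.basis eq_sym (negbTE jk) !mulr0.
  have r1' : 1 < r by rewrite lt_def rn1 r1.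
  exact: attain_r.
- exists (fun j => delta * Num.sg (y j)); split.
    have [[k ->] _] := maxI_spec (fun i => `|delta * Num.sg (y i)|) n0.
    by rewrite normrM ger0_norm // -[X in _ <= X]mulr1 ler_wpM2l // sg_le1.
  rewrite invr1 powRr1; last by apply: sumr_ge0 => i _; apply: powR_ge0.
  rewrite /dot mulr_sumr.
  by apply: eq_bigr => i _; rewrite powRr1 // mulrCA normrEsg [Num.sg _ * _]mulrC.
Qed.


Lemma attain_all (R : realType) n (p : \bar R) (y : vec R n) (delta : R) : (0 < n)%N ->
  (1 <= p)%E -> 0 <= delta ->
  exists D : vec R n, pnorm p D <= delta /\ dot y D = delta * pnorm (dual p) y.
Proof.
move=> n0 hp d0; case: p hp => [r| |] // hp.
- move: hp; rewrite lee_fin => r1.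
  have [->|rn1] := eqVneq r 1; first by apply: attain.
  have r1' : 1 < r by rewrite lt_def rn1 r1.
  rewrite /dual (negbTE rn1); exact: attain_r.
- by apply: attain.
Qed.

Lemma dot_vadd (R : realType) n (x y z : vec R n) : dot x (vadd y z) = dot x y + dot x z.
Proof. by rewrite /dot -big_split; apply: eq_bigr => i _; rewrite /vadd mulrDr. Qed.

Lemma part1 (R : realType) n (rhat : vec R n) (delta : R) (p : \bar R) (pi : vec R n) :
  (0 < n)%N -> 0 <= delta -> (1 <= p)%E -> simplex pi ->
  IsMaxOver (fun D : vec R n => pnorm p D <= delta)
           (fun D => Reg pi (vadd rhat D))
           (maxI (fun i => rhat i - dot pi rhat + delta * bcoef p i pi)).
Proof.
move=> n0 d0 hp spi.
set F := fun i => rhat i - dot pi rhat + delta * bcoef p i pi.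
have key : forall (D : vec R n) k, rhat k + D k - dot pi (vadd rhat D) =
   rhat k - dot pi rhat + dot (vsub (Defs.basis R k) pi) D.
  move=> D k; rewrite dot_vadd dot_vsub dot_basis; lra.
have ub : forall D, pnorm p D <= delta -> Reg pi (vadd rhat D) <= maxI F.
  move=> D hD; rewrite Reg_eq //.
  have [[k ->] _] := maxI_spec (vadd rhat D) n0.
  have [_ HV] := maxI_spec F n0; apply: le_trans (HV k).
  rewrite /vadd key /F lerD2l.
  apply: (le_trans (holder_all _ _ n0 hp)).
  by rewrite ler_wpM2r // pnorm_ge0.
split; last by [].
have [[k Vk] _] := maxI_spec F n0.
have [D [hD hDd]] := attain_all (vsub (Defs.basis R k) pi) n0 hp d0.
exists D; split => //; apply/le_anti/andP; split; first exact: ub.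
rewrite Vk Reg_eq //; have [_ HR] := maxI_spec (vadd rhat D) n0.
rewrite (le_trans _ (lerB (HR k) (lexx (dot pi (vadd rhat D))))) //.
by rewrite /vadd key hDd /F.
Qed.


Lemma simplex_le (R : realType) n (pi : vec R n) i j : simplex pi -> j != i ->
  pi i + pi j <= 1.
Proof.
move=> [p0 p1] ji; rewrite -p1 (bigD1 i) //= lerD2l (bigD1 j) //= ler_wpDr //.
by apply: sumr_ge0 => l _; apply: p0.
Qed.

Lemma simplex_rest (R : realType) n (pi : vec R n) i : simplex pi ->
  \sum_(j < n | j != i) pi j = 1 - pi i.
Proof. by move=> [_ p1]; rewrite -p1 [X in _ = X - _](bigD1 i) //=; lra. Qed.

Lemma part3 (R : realType) n (pi : vec R n) (i : 'I_n) : simplex pi ->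
  bcoef 1%E i pi = 1 - pi i /\ bcoef +oo%E i pi = 2 * (1 - pi i).
Proof.
move=> spi; have [p0 p1] := spi.
have pi1 : pi i <= 1.
  by rewrite -p1 (bigD1 i) //= ler_wpDr //; apply: sumr_ge0 => l _; apply: p0.
split.
  rewrite /bcoef /dual eqxx /= (maxI_eq (k := i)).
    by rewrite /vsub /Defs.basis eqkk ger0_norm // subr_ge0.
  move=> j; have [->|ji] := eqVneq j i; first by [].
  have ij : (i == j) = false by rewrite eq_sym (negbTE ji).
  rewrite /vsub /Defs.basis [i == i]eqkk ij sub0r normrN (ger0_norm (p0 j)).
  rewrite (@ger0_norm _ (1 - pi i)) ?subr_ge0 //.
  by have := simplex_le spi ji; lra.
rewrite /bcoef /= -[X in X = _]/(pnorm 1%E _) pnorm1 (bigD1 i) //=.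
rewrite /vsub /Defs.basis eqkk ger0_norm ?subr_ge0 //.
rewrite (eq_bigr (fun j => pi j)); last first.
  by move=> j ji; rewrite eq_sym (negbTE ji) sub0r normrN ger0_norm.
rewrite simplex_rest // -[true%:R]/(1:R); lra.
Qed.


Lemma sum3 (R : realType) n (F : 'I_n -> R) a b c :
  b != a -> c != a -> c != b ->
  (forall l, l != a -> l != b -> l != c -> F l = 0) ->
  \sum_(l < n) F l = F a + F b + F c.
Proof.
move=> ba ca cb H; rewrite (bigD1 a) //= (bigD1 b) //= (bigD1 c) /=; last first.
  by rewrite ca cb.
rewrite big1 ?addr0 ?addrA // => l /andP [/andP [la lb] lc]; exact: H.
Qed.

Lemma half_pow (R : realType) (q : R) : 1 < q -> (2^-1 : R) `^ q != 2^-1.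
Proof.
move=> q1; apply/eqP => /(congr1 (@ln R)); rewrite ln_powR => /eqP.
have h : ln (2^-1 : R) < 0 by apply: ln_lt0; rewrite invr_gt0 invf_lt1 //=; lra.
rewrite -subr_eq0 -[X in _ - X]mul1r -mulrBl mulf_eq0 => /orP [|]; last by rewrite lt_eqF.
by rewrite subr_eq0 => /eqP q1'; move: q1; rewrite q1' ltxx.
Qed.

Lemma not_local (R : realType) n (r : R) : (3 <= n)%N -> 1 < r ->
  ~ (forall i : 'I_n, exists f : R -> R,
       forall pi : vec R n, simplex pi -> bcoef r%:E i pi = f (pi i)).
Proof.
move=> hn r1 H.
set q := r / (r - 1).
have q1 : 1 < q by rewrite /q ltr_pdivlMr ?subr_gt0 //; lra.
have q0 : 0 < q by lra.
have h0 : (0 < n)%N by apply: leq_trans hn.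
have h1 : (1 < n)%N by apply: leq_trans hn.
have h2 : (2 < n)%N by [].
pose i0 := Ordinal h0; pose i1 := Ordinal h1; pose i2 := Ordinal h2.
have e01 : (i0 == i1) = false by [].
have e02 : (i0 == i2) = false by [].
have e12 : (i1 == i2) = false by [].
have e10 : (i1 == i0) = false by [].
have e20 : (i2 == i0) = false by [].
have e21 : (i2 == i1) = false by [].
have [f Hf] := H i0.
pose pi1 : vec R n := Defs.basis R i1.
pose pi2 : vec R n := fun l => (Defs.basis R i1 l + Defs.basis R i2 l) / 2.
have s1 : simplex pi1 by apply: simplex_basis.
have s2 : simplex pi2.
  have [b1 b1s] := simplex_basis R i1; have [b2 b2s] := simplex_basis R i2.
  split; first by move=> l; rewrite /pi2 divr_ge0 // addr_ge0.
  by rewrite /pi2 -mulr_suml big_split /= b1s b2s; lra.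
have z1 : pi1 i0 = 0 by rewrite /pi1 /Defs.basis e10.
have z2 : pi2 i0 = 0 by rewrite /pi2 /Defs.basis e10 e20 addr0 mul0r.
have E : bcoef r%:E i0 pi1 = bcoef r%:E i0 pi2 by rewrite (Hf _ s1) (Hf _ s2) z1 z2.
rewrite /pi1 /pi2 in E.
rewrite /bcoef /dual (gt_eqF r1) /= in E.
rewrite -/q in E.
rewrite (sum3 (a := i0) (b := i1) (c := i2)) // in E; last first.
  move=> l la lb lc; rewrite /vsub /Defs.basis.
  rewrite (_ : (i0 == l) = false); last by rewrite eq_sym (negbTE la).
  rewrite (_ : (i1 == l) = false); last by rewrite eq_sym (negbTE lb).
  by rewrite subrr normr0 powR0 ?gt_eqF.
rewrite (sum3 (a := i0) (b := i1) (c := i2)) // in E; last first.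
  move=> l la lb lc; rewrite /vsub /Defs.basis.
  rewrite (_ : (i0 == l) = false); last by rewrite eq_sym (negbTE la).
  rewrite (_ : (i1 == l) = false); last by rewrite eq_sym (negbTE lb).
  rewrite (_ : (i2 == l) = false); last by rewrite eq_sym (negbTE lc).
  by rewrite addr0 mul0r sub0r normrN normr0 powR0 ?gt_eqF.
rewrite /vsub /Defs.basis !eqkk e01 e02 e12 e10 e20 e21 in E.
rewrite -[true%:R]/(1:R) -[false%:R]/(0:R) in E.
rewrite ?subr0 ?addr0 ?add0r ?mul0r ?subr0 ?sub0r ?subrr ?normr0 ?powR0 ?gt_eqF // in E.
rewrite !normrN normr1 mul1r ger0_norm ?invr_ge0 // powR1 /= addr0 in E.
have qi : 0 < q^-1 by rewrite invr_gt0.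
have hge := powR_ge0 (2^-1 : R) q.
have Z := @powR_injective R q^-1 qi (1 + 1) (1 + 2^-1 `^ q + 2^-1 `^ q).
rewrite !nnegrE in Z.
have Z2 := Z ltac:(lra) ltac:(lra) E.
clear Z E H Hf.
have hh : (2^-1 : R) `^ q = 2^-1 by lra.
by move: (half_pow q1); rewrite hh eqxx.
Qed.


Lemma maxI_shift (R : realType) n (F : 'I_n -> R) c : (0 < n)%N ->
  maxI (fun i => F i + c) = maxI F + c.
Proof.
move=> n0; have [k Hk] := argmax_ex F n0.
rewrite (maxI_eq Hk) (@maxI_eq _ _ (fun i => F i + c) k) // => i.
by rewrite lerD2r.
Qed.

Theorem mainTheorem10 (R : realType) (n : nat) (hn : (3 <= n)%N)
    (rhat : vec R n) (delta : R) (hdelta : 0 <= delta)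
    (p : \bar R) (hp : (1 <= p)%E) :
  [/\ (forall pi : vec R n, simplex pi ->
         IsMaxOver (fun D : vec R n => pnorm p D <= delta)
           (fun D => Reg pi (vadd rhat D))
           (maxI (fun i => rhat i - dot pi rhat + delta * bcoef p i pi))),
      ((forall i : 'I_n, exists f : R -> R,
           forall pi : vec R n, simplex pi -> bcoef p i pi = f (pi i))
        <-> (p = 1%E \/ p = +oo%E)),
      (forall (pi : vec R n) (i : 'I_n), simplex pi ->
           bcoef 1%E i pi = 1 - pi i /\ bcoef +oo%E i pi = 2 * (1 - pi i))
    & (forall pi : vec R n, simplex pi ->
         IsMaxOver (fun D : vec R n => pnorm +oo%E D <= delta)
           (fun D => Reg pi (vadd rhat D))
           (2 * delta + maxI (fun i => rhat i - 2 * delta * pi i) - dot pi rhat))].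
Proof.
have n0 : (0 < n)%N by apply: leq_trans hn.
split.
- by move=> pi spi; apply: part1.
- split.
    case: p hp => [r| |] hp H; last by [].
      move: hp; rewrite lee_fin => r1.
      have [->|rn1] := eqVneq r 1; first by left.
      exfalso; apply: (not_local hn _ H).
      by rewrite lt_def rn1 r1.
    by right.
  case => ->.
    by move=> i; exists (fun t => 1 - t) => pi spi; case: (part3 i spi).
  by move=> i; exists (fun t => 2 * (1 - t)) => pi spi; case: (part3 i spi).
- by move=> pi i spi; apply: part3.
move=> pi spi.
have P := @part1 R n rhat delta +oo%E pi n0 hdelta (leey _) spi.
have -> : 2 * delta + maxI (fun i => rhat i - 2 * delta * pi i) - dot pi rhat =
   maxI (fun i => rhat i - dot pi rhat + delta * bcoef +oo%E i pi).
  rewrite (_ : (fun i => rhat i - dot pi rhat + delta * bcoef +oo%E i pi) =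
     (fun i => (rhat i - 2 * delta * pi i) + (2 * delta - dot pi rhat))).
    by rewrite maxI_shift //; lra.
  apply: boolp.funext => i; have [_ ->] := part3 i spi; lra.
exact: P.
Qed.
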